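(* Let $X,Y$ be metric spaces and $f,g:X\to Y$ be 1-Lipschitz maps. For any two Borel probability measures $\mu,\nu$ on $X$, \[ |d_{\mathrm{KF}}^\mu(f,g)-d_{\mathrm{KF}}^\nu(f,g)|\le 2\,d_{\mathrm P}(\mu,\nu). \]
   Context: For a Borel probability measure $\mu$ on $X$ and maps $f,g:X\to Y$, $d_{\mathrm{KF}}^\mu(f,g):=\inf\{\varepsilon\ge0:\mu(\{x: d_Y(f(x),g(x))>\varepsilon\})\le\varepsilon\}$. $d_{\mathrm P}$ is the Prohorov metric: $d_{\mathrm P}(\mu,\nu):=\inf\{\varepsilon>0:\mu(U_\varepsilon(A))\ge\nu(A)-\varepsilon\ \forall\text{ Borel }A\subset X\}$, $U_\varepsilon(A)$ the open $\varepsilon$-neighborhood. *)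

(* Defs.v *)
From HB Require Import structures.
From mathcomp Require Import all_boot all_order all_algebra.
From mathcomp Require Import all_classical all_reals all_analysis.
Set Implicit Arguments. Unset Strict Implicit. Unset Printing Implicit Defensive.
Import Order.TTheory GRing.Theory Num.Theory.
Local Open Scope classical_set_scope.
Local Open Scope ring_scope.

Definition is_metric (R : realType) (T : Type) (dist : T -> T -> R) : Prop :=
  [/\ forall x y, dist x y = 0 <-> x = y,
      forall x y, dist x y = dist y x &
      forall x y z, dist x z <= dist x y + dist y z].

Definition metric_open (R : realType) (T : Type) (dist : T -> T -> R)
  (U : set T) : Prop :=
  forall x, U x -> exists2 r : R, 0 < r & forall y, dist x y < r -> U y.

Definition is_borel (R : realType) d (T : measurableType d)
  (dist : T -> T -> R) : Prop :=
  (@measurable d T) = <<s [set U : set T | metric_open dist U] >>.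

Definition lipschitz1 (R : realType) (X Y : Type) (dX : X -> X -> R)
  (dY : Y -> Y -> R) (f : X -> Y) : Prop :=
  forall x x', dY (f x) (f x') <= dX x x'.

Definition open_nbhd (R : realType) (T : Type) (dist : T -> T -> R)
  (eps : R) (A : set T) : set T :=
  [set x | exists2 a, A a & dist x a < eps].

Definition ky_fan (R : realType) d (X : measurableType d) (Y : Type)
  (dY : Y -> Y -> R) (mu : probability X R) (f g : X -> Y) : R :=
  inf [set eps : R | 0 <= eps /\
        (mu [set x | (eps < dY (f x) (g x))%R] <= eps%:E)%E].

Definition prohorov (R : realType) d (X : measurableType d)
  (dX : X -> X -> R) (mu nu : probability X R) : R :=
  inf [set eps : R | 0 < eps /\
        forall A : set X, measurable A ->
          (nu A - eps%:E <= mu (open_nbhd dX eps A))%E].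

(* Main.v *)
Require Import Defs.
From HB Require Import structures.
From mathcomp Require Import all_boot all_order all_algebra.
From mathcomp Require Import all_classical all_reals all_analysis.
From mathcomp Require Import lra.
Import Order.TTheory GRing.Theory Num.Theory.
Local Open Scope classical_set_scope.
Local Open Scope ring_scope.

Section Aux.
Variables (R : realType) (d : measure_display) (X : measurableType d).
Variables (dX : X -> X -> R) (hX : is_metric dX) (hB : is_borel dX).

Lemma open_meas (U : set X) : metric_open dX U -> measurable U.
Proof. by move=> oU; rewrite hB; exact: sub_gen_smallest. Qed.
Arguments open_meas {U}.

Lemma nbhd_open eps A : metric_open dX (open_nbhd dX eps A).
Proof.
case: hX => _ hs ht.
move=> x [a Aa xa]; exists (eps - dX x a); first by rewrite subr_gt0.
move=> y xy; exists a => //.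
have := ht y x a; rewrite (hs y x); lra.
Qed.

Lemma prob_real (P : probability X R) A : measurable A ->
  exists r : R, P A = r%:E /\ 0 <= r.
Proof.
move=> mA; exists (fine (P A)); rewrite fineK; last exact: fin_num_measure.
split => //; rewrite -lee_fin fineK; [exact: measure_ge0|exact: fin_num_measure].
Qed.

Arguments prob_real P {A}.

Lemma prohorov_sym (mu nu : probability X R) eps :
  (forall A, measurable A -> (nu A - eps%:E <= mu (open_nbhd dX eps A))%E) ->
  forall A, measurable A -> (mu A <= nu (open_nbhd dX eps A) + eps%:E)%E.
Proof.
case: hX => _ hs _.
move=> H A mA.
have mU := open_meas (nbhd_open eps A).
have mC : measurable (~` open_nbhd dX eps A) by exact: measurableC.
have mUC := open_meas (nbhd_open eps (~` open_nbhd dX eps A)).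
have sub : open_nbhd dX eps (~` open_nbhd dX eps A) `<=` ~` A.
  move=> x [b Hb xb] Ax; apply: Hb; exists x => //; by rewrite hs.
have mCA : measurable (~` A) by exact: measurableC.
have h1 := H _ mC; rewrite probability_setC // in h1.
have h2 : (mu (open_nbhd dX eps (~` open_nbhd dX eps A)) <= mu (~` A))%E.
  exact: (le_measure mu (mem_set mUC) (mem_set mCA) sub).
rewrite probability_setC // in h2. move: h1 h2.
have [a [-> _]] := prob_real mu mA.
have [b [-> _]] := prob_real nu mU.
have [c [-> _]] := prob_real mu mUC.
rewrite -!EFinB -?EFinD !lee_fin. lra.
Qed.

Variables (Y : Type) (dY : Y -> Y -> R) (hY : is_metric dY) (f g : X -> Y).
Variables (hf : lipschitz1 dX dY f) (hg : lipschitz1 dX dY g).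

Let D x := dY (f x) (g x).

Lemma D_lip x y : D x <= D y + 2 * dX x y.
Proof.
case: hY => _ hsY htY; case: hX => _ hsX _.
rewrite /D.
have h1 := htY (f x) (f y) (g x).
have h2 := htY (f y) (g y) (g x).
have h3 := hf x y. have h4 := hg y x.
rewrite (hsY (g y)) hsX in h2 h4 *.
lra.
Qed.

Lemma super_open t : metric_open dX [set x | t < D x].
Proof.
move=> x /= tx; exists ((D x - t) / 2); first by rewrite divr_gt0 // subr_gt0.
move=> y xy; have := D_lip x y; lra.
Qed.

Lemma key (P Q : probability X R) (eps eta : R) : 0 <= eps ->
  (forall A, measurable A -> (P A <= Q (open_nbhd dX eps A) + eps%:E)%E) ->
  0 <= eta -> (Q [set x | (eta < D x)%R] <= eta%:E)%E ->
  0 <= eta + 2 * eps /\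
  (P [set x | (eta + 2 * eps < D x)%R] <= (eta + 2 * eps)%:E)%E.
Proof.
case: hX => _ hsX _.
move=> e0 H eta0 Heta; split; first lra.
set A := [set x | eta + 2 * eps < D x].
have mA : measurable A by exact/open_meas/super_open.
have mU := open_meas (nbhd_open eps A).
have mE : measurable [set x | eta < D x] by exact/open_meas/super_open.
have sub : open_nbhd dX eps A `<=` [set x | eta < D x].
  move=> y [a Aa ya]; rewrite /A /= in Aa *.
  have := D_lip a y; rewrite hsX; lra.
have : (Q (open_nbhd dX eps A) <= Q [set x | (eta < D x)%R])%E.
  exact: (le_measure Q (mem_set mU) (mem_set mE) sub).
have := H _ mA; move: Heta.
have [a [-> _]] := prob_real P mA.
have [b [-> _]] := prob_real Q mU.
have [c [-> _]] := prob_real Q mE.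
rewrite -!EFinD !lee_fin; lra.
Qed.

End Aux.

Lemma step (R : realType) (d : measure_display) (X : measurableType d)
  (Y : Type) (dX : X -> X -> R) (dY : Y -> Y -> R)
  (hX : is_metric dX) (hY : is_metric dY) (hB : is_borel dX)
  (f g : X -> Y) (hf : lipschitz1 dX dY f) (hg : lipschitz1 dX dY g)
  (mu nu P Q : probability X R) :
  (forall e, 0 < e -> (forall A : set X, measurable A ->
          (nu A - e%:E <= mu (open_nbhd dX e A))%E) ->
     forall A, measurable A -> (P A <= Q (open_nbhd dX e A) + e%:E)%E) ->
  ky_fan dY P f g <= ky_fan dY Q f g + 2 * prohorov dX mu nu.
Proof.
move=> HPQ.
set SP := [set eps : R | 0 <= eps /\
        (P [set x | (eps < dY (f x) (g x))%R] <= eps%:E)%E].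
set SQ := [set eps : R | 0 <= eps /\
        (Q [set x | (eps < dY (f x) (g x))%R] <= eps%:E)%E].
set Pr := [set eps : R | 0 < eps /\
        forall A : set X, measurable A ->
          (nu A - eps%:E <= mu (open_nbhd dX eps A))%E].
have mS : forall t : R, measurable [set x | (t < dY (f x) (g x))%R].
  by move=> t; apply: (@open_meas _ _ _ _ hB); exact: (@super_open _ _ _ _ hX _ _ hY _ _ hf hg).
have lbP : lbound SP 0 by move=> x [].
have infQ : has_inf SQ.
  split; last by exists 0 => x [].
  exists 1; split => //; exact: probability_le1.
have infPr : has_inf Pr.
  split; last by exists 0 => x [] /ltW.
  exists 1; split => // A mA.
  apply: (@le_trans _ _ 0%E); last exact: measure_ge0.
  rewrite leeBlDr // add0e; exact: probability_le1.
apply/ler_addgt0Pr => delta d0.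
have d3 : 0 < delta / 3 by rewrite divr_gt0.
have [eta [eta0 Heta] etalt] := inf_adherent d3 infQ.
have [eps [eps0 Heps] epslt] := inf_adherent d3 infPr.
have [k1 k2] := @key _ _ _ _ hX hB _ _ hY _ _ hf hg _ _ _ _ (ltW eps0) (HPQ _ eps0 Heps) eta0 Heta.
have : ky_fan dY P f g <= eta + 2 * eps.
  apply: (ge_inf (ex_intro _ 0 lbP)); split => //.
rewrite /ky_fan -/SQ -/SP in etalt *. rewrite /prohorov -/Pr.
lra.
Qed.

Theorem lemma5p6 (R : realType) (d : measure_display) (X : measurableType d)
  (Y : Type) (dX : X -> X -> R) (dY : Y -> Y -> R)
  (hX : is_metric dX) (hY : is_metric dY) (hB : is_borel dX)
  (f g : X -> Y) (hf : lipschitz1 dX dY f) (hg : lipschitz1 dX dY g)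
  (mu nu : probability X R) :
  `| ky_fan dY mu f g - ky_fan dY nu f g | <= 2 * prohorov dX mu nu.
Proof.
have h1 := @step _ _ _ _ _ _ hX hY hB _ _ hf hg mu nu mu nu
  (fun e _ H => @prohorov_sym _ _ _ _ hX hB _ _ _ H).
have h2 : ky_fan dY nu f g <= ky_fan dY mu f g + 2 * prohorov dX mu nu.
  apply: (@step _ _ _ _ _ _ hX hY hB _ _ hf hg mu nu nu mu) => e _ H A mA.
  have := H A mA; rewrite leeBlDr //.
rewrite ler_norml; apply/andP; split; lra.
Qed.
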